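(* Let $P$ be a finite geometric lattice of rank $n$ with a fixed atom ordering, and let $S=\{s_1<\dots<s_r\}\subseteq\{1,\dots,n-1\}$. Then for every filling $F$ of the ribbon $\mathrm{Rib}(s_1,s_2-s_1,\dots,n-s_r)$ whose entries are the elements of a basis of the matroid of $P$ (that is, $n$ atoms whose join is $\hat1$), the alternating sum $\bar f_{chain}(v_F)$ of maximal chains of $P^S$ is a cycle: its boundary in the chain complex of the order complex of $P^S$ is $0$.
   Context: $P^S$ is the subposet of elements with ranks in $S$; its order complex has simplices the chains, oriented in increasing order, with boundary $d(u_1<\dots<u_k)=\sum_{i}(-1)^{i-1}(u_1<\dots<\widehat{u_i}<\dots<u_k)$. $\mathrm{Rib}(r_1,\dots,r_m)$ is the ribbon (connected skew shape with no $2\times2$ square) with rows of lengths $r_1,\dots,r_m$ from bottom to top, each row beginning directly above the last box of the row below. The reading word $(F_1,\dots,F_n)$ of a filling lists entries left to right in each row, rows bottom to top. The tabloid $\{F\}$ is $F$ modulo permutations of entries within rows; $v_F=\sum_{\sigma\in\mathrm{Col}_F}\mathrm{sgn}(\sigma)\{\sigma F\}$ where $\mathrm{Col}_F$ consists of permutations of the entries preserving each column. $\bar f_{chain}(\{F\})$ is the maximal chain $F_1\vee\dots\vee F_{s_1}<F_1\vee\dots\vee F_{s_2}<\dots<F_1\vee\dots\vee F_{s_r}$ of $P^S$, extended linearly. *)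

(* Defs.v *)
From HB Require Import structures.
From mathcomp Require Import all_boot all_order all_algebra all_fingroup.
Set Implicit Arguments. Unset Strict Implicit. Unset Printing Implicit Defensive.
Import Order.TTheory GRing.Theory.

Local Open Scope order_scope.

Section Lattice.
Context {disp : Order.disp_t} (P : finTBLatticeType disp).

Definition covers (x y : P) : bool :=
  (x < y) && [forall z : P, ~~ ((x < z) && (z < y))].

Definition atom (a : P) : bool := covers \bot a.

Definition atomistic : Prop :=
  forall x : P, x = \join_(a : P | atom a && (a <= x)) a.

Definition semimodular : Prop :=
  forall x y : P, covers (x `&` y) x -> covers (x `&` y) y -> covers x (x `|` y).

Definition geometric : Prop := atomistic /\ semimodular.

Definition chain_len (x : P) (k : nat) : bool :=
  [exists t : k.-tuple P, path <%O \bot t && (last \bot t == x)].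

Definition rk (x : P) : nat :=
  \big[maxn/0%N]_(k < #|P| | chain_len x k) (k : nat).

Definition is_basis (n : nat) (F : 'I_n -> P) : Prop :=
  injective F /\ (forall i, atom (F i)) /\ \join_(i < n) F i = \top.

(** the chain F_1 \/ ... \/ F_{s_1} < ... < F_1 \/ ... \/ F_{s_r} (0-based positions) *)
Definition fchain (n : nat) (S : seq nat) (F : 'I_n -> P) : seq P :=
  [seq \join_(j < n | (j < s)%N) F j | s <- S].

End Lattice.

(** Ribbon Rib(r_1,...,r_m): positions 0..N-1 in reading order; position p lies in
    row (number of partial sums r_1+...+r_i that are <= p), and in column
    p - row (each row starts directly above the last box of the row below). *)
Definition rib_row (rs : seq nat) (p : nat) : nat :=
  count (fun s => s <= p)%N (scanl addn 0%N rs).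
Definition rib_col (rs : seq nat) (p : nat) : nat := (p - rib_row rs p)%N.

Definition rowlens (S : seq nat) (n : nat) : seq nat :=
  pairmap (fun a b => b - a)%N 0%N (rcons S n).

Definition col_perm (n : nat) (rs : seq nat) (s : {perm 'I_n}) : bool :=
  [forall p : 'I_n, rib_col rs (s p) == rib_col rs p].

Local Open Scope ring_scope.

(** formal Z-linear combinations of chains (simplices) *)
Definition fchains (T : Type) := seq (int * seq T).

Definition coef (T : eqType) (X : fchains T) (c : seq T) : int :=
  \sum_(x <- X | x.2 == c) x.1.

Definition face (T : Type) (u : seq T) (i : nat) : seq T := take i u ++ drop i.+1 u.

Definition boundary (T : Type) (X : fchains T) : fchains T :=
  flatten [seq [seq ((-1) ^+ i * x.1, face x.2 i) | i <- iota 0 (size x.2)] | x <- X].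

Definition is_cycle (T : eqType) (X : fchains T) : Prop :=
  forall c : seq T, coef (boundary X) c = 0.

(** \bar f_chain (v_F) = sum_{sigma in Col_F} sgn(sigma) f_chain({sigma F}),
    where (sigma F) puts the entry F p at position sigma p. *)
Definition fchain_vF {disp : Order.disp_t} (P : finTBLatticeType disp)
  (n : nat) (S : seq nat) (F : 'I_n -> P) : fchains P :=
  [seq ((-1) ^+ odd_perm s, fchain S (fun p => F ((s^-1)%g p)))
  | s <- enum [pred s : {perm 'I_n} | col_perm (rowlens S n) s]].

(* Main.v *)
Require Import Defs.
From HB Require Import structures.
From mathcomp Require Import all_boot all_order all_algebra all_fingroup.
From mathcomp Require Import zify.
Import Order.TTheory GRing.Theory.

Lemma coefE (T : eqType) (X : fchains T) c :
  coef (boundary X) c =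
  (\sum_(x <- X) \sum_(i <- iota 0 (size x.2) | face x.2 i == c) ((-1) ^+ i * x.1))%R.
Proof.
rewrite /coef /boundary big_flatten /= big_map.
by apply: eq_bigr => x _; rewrite big_map.
Qed.

Lemma scan_pairmap (x : nat) (s : seq nat) :
  path leq x s -> scanl addn x (pairmap (fun a b => b - a) x s) = s.
Proof.
elim: s x => [|y s IH] x //= /andP[hxy hp].
by rewrite subnKC // IH.
Qed.

Lemma rowlensE (S : seq nat) (n : nat) :
  sorted ltn S -> all (fun s => (0 < s < n)%N) S ->
  scanl addn 0 (rowlens S n) = rcons S n.
Proof.
move=> hs ha; apply: scan_pairmap.
rewrite rcons_path; apply/andP; split.
  rewrite path_sortedE; last exact: leq_trans.
  apply/andP; split; first by apply/allP.
  by apply: sub_sorted hs => a b /ltnW.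
have := mem_last 0 S; rewrite inE => /orP[/eqP -> //|hm].
by have /andP[_ /ltnW] := allP ha _ hm.
Qed.

Lemma face_map (A B : Type) (f : A -> B) (s : seq A) i :
  face (map f s) i = map f (face s i).
Proof. by rewrite /face map_cat map_take map_drop. Qed.

Lemma face_neq (S : seq nat) i k :
  uniq S -> (i < size S)%N -> k \in face S i -> k != nth 0 S i.
Proof.
move=> hu hi hk.
have E : S = take i S ++ nth 0 S i :: drop i.+1 S by rewrite -drop_nth // cat_take_drop.
move: hu; rewrite {1}E cat_uniq /= => /and4P[_ h1 h2 _].
apply/eqP => hke; move: hk; rewrite /face mem_cat hke => /orP[h|h].
  by move: h1; rewrite negb_or h.
by move: h2; rewrite h.
Qed.

Lemma count_split (L : seq nat) a : (0 < a)%N ->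
  count (fun s => s <= a)%N L = (count (fun s => s <= a.-1)%N L + count_mem a L)%N.
Proof.
move=> a0; elim: L => //= x L ->.
have key : ((x <= a) = (x <= a.-1) + (x == a) :> nat)%N.
  case: (ltngtP x a) => h.
  - by rewrite (_ : (x <= a.-1) = true) // -ltnS prednK.
  - by rewrite leqNgt (leq_ltn_trans (leq_pred a) h).
  - by rewrite h leqNgt ltn_predL a0.
rewrite key; lia.
Qed.

Theorem proposition5p27 (disp : Order.disp_t) (P : finTBLatticeType disp)
  (n : nat) (S : seq nat) (F : 'I_n -> P) :
  geometric P ->
  rk (\top : P)%O = n ->
  sorted ltn S ->
  all (fun s => (0 < s < n)%N) S ->
  is_basis F ->
  is_cycle (fchain_vF S F).
Proof.
move=> _ _ hs ha _ c.
have hu : uniq S by apply: sorted_uniq hs; [exact: ltn_trans | exact: ltnn].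
rewrite coefE /fchain_vF big_map big_enum /=.
set ch := fun s : {perm 'I_n} => fchain S (fun p => F ((s^-1)%g p)).
have szch : forall s, size (ch s) = size S by move=> s; rewrite /ch /fchain size_map.
under eq_bigr => s _ do rewrite szch big_mkcond.
rewrite exchange_big /=.
apply: big1_seq => i /andP[_]; rewrite mem_iota add0n => hi.
set a := nth 0 S i.
have aS : a \in S by apply: mem_nth.
have /andP[a0 an] := allP ha a aS.
have a1n : (a.-1 < n)%N by apply: leq_ltn_trans (leq_pred a) an.
pose p0 : 'I_n := Ordinal a1n.
pose p1 : 'I_n := Ordinal an.
pose t := tperm p0 p1.
have p01 : p0 != p1.
  apply/eqP => /(congr1 val) /= h.
  by move: (ltn_predL a); rewrite a0 h ltnn.
set rs := rowlens S n.
have hcol : forall q, rib_col rs (t q) = rib_col rs q.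
  have e : rib_col rs p0 = rib_col rs p1.
    rewrite /rib_col /rib_row /rs rowlensE // /= (count_split _ _ a0).
    have -> : count_mem a (rcons S n) = 1%N.
      rewrite -cats1 count_cat (count_uniq_mem _ hu) aS /=.
      by rewrite (gtn_eqF an).
    lia.
  by move=> q; rewrite /t; case: tpermP => [->|->|] //.
pose G (s : {perm 'I_n}) : int :=
  if Defs.col_perm rs s then
    (if face (fchain S (fun p => F ((s^-1)%g p))) i == c
     then (-1) ^+ i * (-1) ^+ odd_perm s else 0)%R
  else 0%R.
transitivity (\sum_s G s)%R.
  by rewrite big_mkcond /=; apply: eq_bigr => s _; rewrite inE.
have HG : forall s, G (s * t)%g = (- G s)%R.
  move=> s; rewrite /G.
  have -> : Defs.col_perm rs (s * t)%g = Defs.col_perm rs s.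
    by apply: eq_forallb => p; rewrite permM hcol.
  have -> : face (fchain S (fun p => F (((s * t)^-1)%g p))) i =
            face (fchain S (fun p => F ((s^-1)%g p))) i.
    rewrite /fchain !face_map; apply/eq_in_map => k hk.
    have hka := @face_neq _ _ _ hu hi hk.
    rewrite [RHS](reindex_inj (@perm_inj _ t)).
    apply: eq_big => j.
      move/eqP: hka => hka.
      by rewrite /t; case: tpermP => [->|->|//] /=; apply/idP/idP => h'; lia.
    by move=> _; rewrite invMg tpermV permM.
  rewrite odd_permM odd_tperm p01.
  case: (Defs.col_perm rs s) => /=; last by rewrite ?oppr0.
  case: (_ == c) => /=; last by rewrite ?oppr0.
  by case: (odd_perm s) => /=; rewrite ?expr1 ?expr0 ?mulrN ?mulr1 ?opprK.
have h : (\sum_s G s = \sum_s G (s * t)%g)%R := reindex_inj (mulIg t).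
rewrite (eq_bigr (fun s => - G s)%R (fun s _ => HG s)) sumrN in h.
move: h; set X := (\sum_s G s)%R => h.
have : (X *+ 2 == 0)%R by rewrite mulr2n {1}h addNr.
by rewrite Num.Theory.mulrn_eq0 => /orP[/eqP|/eqP].
Qed.
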